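(* Let $X=\{x_j:j\in J\}\subset\mathbb{R}^2$ be finite with $n=|J|$. If $s\in\mathrm{conv}(\mathcal{M})$ and $s$ is equidistant from all points of $X$, then there exist weights $\tau_j\geq\frac{1}{n+1}$ ($j\in J$) with $\sum_j\tau_j=1$ and $s=\sum_j\tau_jx_j$.
   Context: $\mathcal{M}=\{M_j:j\in J\}$ with $M_j=\frac{1}{n+1}\big(x_j+\sum_{i\in J}x_i\big)$. *)

(* Defs.v *)
From HB Require Import structures.
From mathcomp Require Import all_boot all_order all_algebra.
From mathcomp Require Import reals.
Set Implicit Arguments. Unset Strict Implicit. Unset Printing Implicit Defensive.
Import Order.TTheory GRing.Theory Num.Theory.
Local Open Scope ring_scope.

Definition edist (R : realType) (a b : 'rV[R]_2) : R :=
  Num.sqrt (\sum_(i < 2) (a 0 i - b 0 i) ^+ 2).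

Definition in_conv (R : realType) (J : finType) (M : J -> 'rV[R]_2) (s : 'rV[R]_2) : Prop :=
  exists lam : J -> R,
    (forall j, 0 <= lam j) /\ \sum_j lam j = 1 /\ s = \sum_j lam j *: M j.

Definition Mpt (R : realType) (J : finType) (x : J -> 'rV[R]_2) (j : J) : 'rV[R]_2 :=
  (#|J|.+1)%:R^-1 *: (x j + \sum_i x i).

(* Main.v *)
Require Import Defs.
From HB Require Import structures.
From mathcomp Require Import all_boot all_order all_algebra.
From mathcomp Require Import reals.
Import Order.TTheory GRing.Theory Num.Theory.
Local Open Scope ring_scope.

Theorem lemma8 (R : realType) (J : finType) (x : J -> 'rV[R]_2)
  (x_inj : injective x) (s : 'rV[R]_2)
  (hs : in_conv (Mpt x) s)
  (heq : exists r : R, forall j : J, edist s (x j) = r) :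
  exists tau : J -> R,
    (forall j, (#|J|.+1)%:R^-1 <= tau j) /\ \sum_j tau j = 1 /\
    s = \sum_j tau j *: x j.
Proof.
case: hs => lam [lam0 [lam1 ->]].
set c : R := (#|J|.+1)%:R^-1.
have c0 : 0 <= c by rewrite /c invr_ge0 ler0n.
have cn : c * (#|J|.+1)%:R = 1 by rewrite /c mulVf // pnatr_eq0.
exists (fun j => c * (lam j + 1)); split; [|split].
- move=> j; rewrite -{1}(mulr1 c) ler_wpM2l // lerDr; exact: lam0.
- rewrite -mulr_sumr big_split /= lam1.
  have -> : \sum_(j : J) (1:R) = #|J|%:R by rewrite sumr_const.
  rewrite addrC natr1; exact: cn.
- rewrite /Mpt.
  under eq_bigr => j _ do rewrite scalerA mulrC -scalerA scalerDr.
  rewrite -scaler_sumr big_split /= -(scaler_suml (\sum_i x i)) lam1 scale1r.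
  under [RHS]eq_bigr => j _ do rewrite -scalerA scalerDl scale1r.
  by rewrite -scaler_sumr big_split.

Qed.
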